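(* Let $d \geq 2$, $N, K \geq 1$ be integers, $\mathbf{y}_1,\ldots,\mathbf{y}_N \in \mathbb{R}^d$ with matrix $\mathbf{Y} = [\mathbf{y}_1,\ldots,\mathbf{y}_N]$, and $\rho_k^{[i]} \geq 0$ with $\sum_{k=1}^K \rho_k^{[i]} = 1$ for each $i$. Put $\mathbf{A}_k = \sum_{i} \rho_k^{[i]}\mathbf{y}_i\mathbf{y}_i^\mathrm{T}$, $\gamma_k = \sum_i \rho_k^{[i]}$, $\lambda_k = $ largest eigenvalue of $\mathbf{A}_k$, and assume $\gamma_k > 0$ for all $k$. For $S\subseteq[K]$ let $\sigma^2(S) = \big(\|\mathbf{Y}\|_\mathrm{F}^2 - \sum_{k\in S}\lambda_k\big)/\big(dN - \sum_{k\in S}\gamma_k\big)$ and $\mathcal{V} = \{S \subseteq [K] : \sigma^2(S) \leq \lambda_k/\gamma_k \text{ for all } k\in S\}$. Call $S$ saturated if $S \in \mathcal{V}$ and $\sigma^2(S) > \lambda_j/\gamma_j$ for all $j\in[K]\setminus S$. Then there exists a unique saturated set.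
   Context: $[K] = \{1,\ldots,K\}$; $\|\cdot\|_\mathrm{F}$ is the Frobenius norm. *)

(* Defs.v *)
From mathcomp Require Import all_boot all_order all_algebra.
From mathcomp Require Export reals.
From mathcomp Require Export all_boot all_order all_algebra.
Set Implicit Arguments. Unset Strict Implicit. Unset Printing Implicit Defensive.
Import Order.TTheory GRing.Theory Num.Theory.
Local Open Scope ring_scope.

Section Defs.
Variables (R : realType) (d N K : nat).
Variable (Y : 'M[R]_(d, N)).
Variable (rho : 'I_N -> 'I_K -> R).   (* rho i k = rho_k^[i] *)

Definition Amat (k : 'I_K) : 'M[R]_d :=
  \sum_(i < N) rho i k *: (col i Y *m (col i Y)^T).

Definition gam (k : 'I_K) : R := \sum_(i < N) rho i k.

Definition frob2 : R := \sum_(i < d) \sum_(j < N) Y i j ^+ 2.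

Definition is_largest_eigenvalue (n : nat) (A : 'M[R]_n) (l : R) : Prop :=
  eigenvalue A l /\ forall a : R, eigenvalue A a -> a <= l.

Variable (lam : 'I_K -> R).           (* lam k = largest eigenvalue of A_k *)

Definition sigma2 (S : {set 'I_K}) : R :=
  (frob2 - \sum_(k in S) lam k) / ((d * N)%:R - \sum_(k in S) gam k).

Definition in_V (S : {set 'I_K}) : Prop :=
  forall k, k \in S -> sigma2 S <= lam k / gam k.

Definition saturated (S : {set 'I_K}) : Prop :=
  in_V S /\ forall j, j \notin S -> lam j / gam j < sigma2 S.
End Defs.

(* Main.v *)
Require Import Defs.
From mathcomp Require Import all_boot all_order all_algebra reals.
From mathcomp Require Import lra.
Import Order.TTheory GRing.Theory Num.Theory.
Local Open Scope ring_scope.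

Lemma keyL (R : realType) (a b l g s t r : R) :
  0 < b -> 0 < b - g -> 0 < g -> a = s * b -> a - l = t * (b - g) -> l = r * g ->
  (t <= s -> t <= r) /\ (s <= t -> s <= r -> t = s).
Proof.
move=> hb hbg hg ha hal hl.
have e1 : (s - t) * b = (r - t) * g by nra.
have e2 : (s - t) * (b - g) = (r - s) * g by nra.
split.
- move=> hts; have : 0 <= (r - t) * g by rewrite -e1; apply: mulr_ge0; lra.
  rewrite pmulr_lge0 //; lra.
- move=> hst hsr; have : 0 <= (s - t) * (b - g) by rewrite e2; apply: mulr_ge0; lra.
  rewrite pmulr_lge0 //; lra.
Qed.

Theorem lemma5 (R : realType) (d N K : nat)
  (Y : 'M[R]_(d, N)) (rho : 'I_N -> 'I_K -> R) (lam : 'I_K -> R) :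
  (2 <= d)%N -> (1 <= N)%N -> (1 <= K)%N ->
  (forall i k, 0 <= rho i k) ->
  (forall i, \sum_(k < K) rho i k = 1) ->
  (forall k, 0 < gam rho k) ->
  (forall k, is_largest_eigenvalue (Amat Y rho k) (lam k)) ->
  exists! S : {set 'I_K}, saturated Y rho lam S.
Proof.
move=> hd hN hK hrho hsum hgam _.
set sig := sigma2 Y rho lam.
set D : R := (d * N)%:R.
have hall : \sum_k gam rho k = N%:R.
  rewrite /gam exchange_big /=.
  under eq_bigr do rewrite hsum.
  by rewrite sumr_const card_ord.
have hb : forall S : {set 'I_K}, 0 < D - \sum_(k in S) gam rho k.
  move=> S.
  have h1 : \sum_(k in S) gam rho k <= N%:R.
    rewrite -hall [X in _ <= X](bigID (fun k => k \in S)) /= lerDl.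
    by apply: sumr_ge0 => k _; apply: ltW.
  have h2 : N%:R < D :> R.
    by rewrite /D ltr_nat ltn_Pmull.
  lra.
have hsigE : forall S, sig S * (D - \sum_(k in S) gam rho k)
    = frob2 Y - \sum_(k in S) lam k.
  by move=> S; rewrite /sig /sigma2 divfK // gt_eqF // hb.
have hr : forall k, lam k = lam k / gam rho k * gam rho k.
  by move=> k; rewrite divfK // gt_eqF.
have hadd : forall (U : {set 'I_K}) k, k \notin U ->
    (sig (k |: U) <= sig U -> sig (k |: U) <= lam k / gam rho k) /\
    (sig U <= sig (k |: U) -> sig U <= lam k / gam rho k -> sig (k |: U) = sig U).
  move=> U k kU.
  have := hsigE (k |: U); rewrite !big_setU1 //= => e.
  apply: (@keyL R (frob2 Y - \sum_(k in U) lam k) (D - \sum_(k in U) gam rho k)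
              (lam k) (gam rho k)).
  - exact: hb.
  - have := hb (k |: U); rewrite big_setU1 //=; lra.
  - exact: hgam.
  - by rewrite hsigE.
  - rewrite (_ : D - _ - gam rho k = D - (gam rho k + \sum_(k in U) gam rho k)); lra.
  - exact: hr.
have hsat2 : forall A B, saturated Y rho lam A -> saturated Y rho lam B ->
    sig A <= sig B -> A = B.
  move=> A B [hA1 hA2] [hB1 hB2] hAB.
  have sBA : B \subset A.
    apply/subsetP => k kB; apply/negPn/negP => kA.
    have := hA2 k kA; have := hB1 k kB; rewrite -/sig; lra.
  apply/eqP; rewrite eqEsubset sBA andbT.
  apply/subsetP => k kA; apply/negPn/negP => kB.
  have split : forall f : 'I_K -> R, \sum_(i in A) f i
      = \sum_(i in B) f i + \sum_(i in A | i \notin B) f i.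
    move=> f; rewrite (bigID (fun i => i \in B)) /=; congr (_ + _).
    apply: eq_bigl => i; apply/andP/idP => [[]//|iB]; split=> //.
    exact: (subsetP sBA).
  have hlt : \sum_(i in A | i \notin B) lam i
      < sig B * \sum_(i in A | i \notin B) gam rho i.
    rewrite mulr_sumr; apply: ltr_sum.
      by apply/hasP; exists k; [rewrite mem_index_enum | rewrite kA kB].
    move=> i /andP [_ iB]; have := hB2 i iB; rewrite -/sig => h.
    rewrite (hr i); have := hgam i; nra.
  have eA := hsigE A; have eB := hsigE B.
  rewrite !split in eA.
  have := hb A; rewrite split => hbA.
  have : sig A * (D - (\sum_(i in B) gam rho i + \sum_(i in A | i \notin B) gam rho i))
     <= sig B * (D - (\sum_(i in B) gam rho i + \sum_(i in A | i \notin B) gam rho i)).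
    by rewrite ler_pM2r.
  rewrite eA (_ : D - (_ + _) = (D - \sum_(i in B) gam rho i) - \sum_(i in A | i \notin B) gam rho i);
    last lra.
  rewrite mulrBr eB; lra.
case: (@arg_minP _ _ {set 'I_K} set0 predT sig isT) => Smin _ hmin.
case: (@arg_maxnP {set 'I_K} Smin (fun S => sig S == sig Smin) (fun S => #|S|) (eqxx _))
  => S1 /eqP hS1 hmax.
have satS1 : saturated Y rho lam S1.
  split.
  - move=> k kS1; rewrite -/sig.
    have kU : k \notin S1 :\ k by rewrite !inE eqxx.
    have := (hadd _ _ kU).1; rewrite setD1K //; apply.
    by rewrite hS1; apply: hmin.
  - move=> j jS1; rewrite -/sig; rewrite ltNge; apply/negP => hj.
    have hm : sig S1 <= sig (j |: S1) by rewrite hS1; apply: hmin.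
    have e := (hadd _ _ jS1).2 hm hj.
    have := hmax (j |: S1); rewrite e hS1 eqxx => /(_ isT).
    rewrite cardsU1 jS1 add1n => h; by have := leq_ltn_trans h (ltnSn _); rewrite ltnn.
exists S1; split => // S' satS'.
case: (leP (sig S1) (sig S')) => h.
- exact: hsat2.
- apply/esym; apply: hsat2 => //; exact: ltW.
Qed.
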